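(* Let $\mathcal G$ be a tree on $n\ge2$ nodes, with oriented incidence matrix $D_\tau\in\mathbb R^{n\times(n-1)}$, edge-weight matrix $W=\rho I$ for some $\rho>0$, and time-scale matrix $E=\mathrm{diag}(\epsilon_1,\dots,\epsilon_n)$, $\epsilon_i>0$; let $L_{e,s}^\tau=D_\tau^TE^{-1}D_\tau$ and $\sigma_w,\sigma_v$ real scalars. Consider $$\tilde\Sigma_\tau(s)=\big(sI+L_{e,s}^\tau W\big)^{-1}\begin{bmatrix}\sigma_wD_\tau^TE^{-1/2} & -\sigma_vL_{e,s}^\tau W^{1/2}\end{bmatrix},\qquad\Pi_\tau(s)=W^{1/2}\tilde\Sigma_\tau(s).$$ Then $$\|\tilde\Sigma_\tau\|_\infty^2=\frac1\rho\|\Pi_\tau\|_\infty^2=\frac{1}{\rho^2}\sigma_w^2\,\bar\sigma\big((L_{e,s}^\tau)^{-1}\big)+\frac1\rho\sigma_v^2=L=U,$$ where $L=\max\{L_1,L_2\}$ with $L_1=\dfrac{\sigma_w^2+\sigma_v^2\lambda_{\min}(L_{e,s}^\tau)\lambda_{\max}(W^{1/2})^2}{\lambda_{\min}(L_{e,s}^\tau)\lambda_{\max}(W^{1/2})^4}$, $L_2=\dfrac{\sigma_w^2+\sigma_v^2\lambda_{\max}(L_{e,s}^\tau)\lambda_{\max}(W^{1/2})\lambda_{\min}(W^{1/2})}{\lambda_{\max}(L_{e,s}^\tau)\lambda_{\max}(W^{1/2})^3\lambda_{\min}(W^{1/2})}$, and $U=\dfrac{\sigma_w^2+\sigma_v^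2\lambda_{\min}(L_{e,s}^\tau)\lambda_{\min}(W^{1/2})^2}{\lambda_{\min}(L_{e,s}^\tau)\lambda_{\min}(W^{1/2})^4}$.
   Context: The incidence matrix of a graph with an arbitrary orientation of each edge has entry $1$ in row $i$, column $l$ if node $i$ is the initial node of edge $l$, $-1$ if it is the terminal node, and $0$ otherwise. Powers of positive diagonal matrices are taken entrywise. $\lambda_{\max},\lambda_{\min}$ denote the largest and smallest eigenvalues of a symmetric matrix. For a stable transfer matrix $\Phi(s)$, $\|\Phi\|_\infty=\sup_{\omega\in\mathbb R}\bar\sigma(\Phi(j\omega))$ where $\bar\sigma$ is the largest singular value. *)

(* Defs.v *)
From HB Require Import structures.
From mathcomp Require Import all_boot all_order all_algebra.
From mathcomp Require Import boolp classical_sets reals.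
From mathcomp.real_closed Require Import complex.

Set Implicit Arguments.
Unset Strict Implicit.
Unset Printing Implicit Defensive.

Import Order.TTheory GRing.Theory Num.Theory.
Local Open Scope ring_scope.
Local Open Scope classical_set_scope.
Local Open Scope complex_scope.

Definition oriented_edge_col {R : realType} n m (D : 'M[R]_(n, m)) (l : 'I_m) :=
  exists i j : 'I_n, [/\ i != j, D i l = 1, D j l = -1 &
    forall k, k != i -> k != j -> D k l = 0].

Definition inc_adj {R : realType} n m (D : 'M[R]_(n, m)) : rel 'I_n :=
  fun i j => (i != j) && [exists l, (D i l != 0) && (D j l != 0)].

(* A simple connected graph with n nodes and n-1 edges is exactly a tree. *)
Definition tree_incidence {R : realType} n (D : 'M[R]_(n, n.-1)) :=
  [/\ forall l, oriented_edge_col D l,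
      forall l1 l2 : 'I_n.-1, l1 != l2 ->
        exists k, D k l1 != 0 /\ D k l2 == 0 &
      forall i j : 'I_n, connect (inc_adj D) i j].

Definition dsqrt {R : realType} k (A : 'M[R]_k) : 'M[R]_k :=
  \matrix_(i, j) (if i == j then Num.sqrt (A i i) else 0).

Definition lam_max {R : realType} k (A : 'M[R]_k) : R :=
  sup [set x : R | eigenvalue A x].
Definition lam_min {R : realType} k (A : 'M[R]_k) : R :=
  inf [set x : R | eigenvalue A x].

(* largest eigenvalue of a complex Hermitian matrix (its eigenvalues are real) *)
Definition lam_maxC {R : realType} k (A : 'M[R[i]]_k) : R :=
  sup [set x : R | eigenvalue A x%:C].

Definition ctrmx {R : realType} p q (A : 'M[R[i]]_(p, q)) : 'M[R[i]]_(q, p) :=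
  (map_mx (@conjc R) A)^T.

Definition sv_maxC {R : realType} p q (A : 'M[R[i]]_(p, q)) : R :=
  Num.sqrt (lam_maxC (ctrmx A *m A)).

Definition sv_max {R : realType} p q (A : 'M[R]_(p, q)) : R :=
  Num.sqrt (lam_max (A^T *m A)).

Definition Hinf_norm {R : realType} p q (Phi : R[i] -> 'M[R[i]]_(p, q)) : R :=
  sup [set sv_maxC (Phi ('i * w%:C)) | w in [set: R]].

Definition toCmx {R : realType} p q (A : 'M[R]_(p, q)) : 'M[R[i]]_(p, q) :=
  map_mx (fun x : R => x%:C) A.

Definition Les {R : realType} n (D : 'M[R]_(n, n.-1)) (E : 'M[R]_n) :=
  D^T *m invmx E *m D.

Definition Sigma_t {R : realType} n (D : 'M[R]_(n, n.-1)) (E : 'M[R]_n)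
    (W : 'M[R]_n.-1) (sw sv : R) (s : R[i]) : 'M[R[i]]_(n.-1, n + n.-1) :=
  invmx (s%:M + toCmx (Les D E *m W)) *m
    toCmx (row_mx (sw *: (D^T *m dsqrt (invmx E)))
                  (- (sv *: (Les D E *m dsqrt W)))).

Definition Pi_t {R : realType} n (D : 'M[R]_(n, n.-1)) (E : 'M[R]_n)
    (W : 'M[R]_n.-1) (sw sv : R) (s : R[i]) : 'M[R[i]]_(n.-1, n + n.-1) :=
  toCmx (dsqrt W) *m Sigma_t D E W sw sv s.

(* Main.v *)
Require Import Defs.
From HB Require Import structures.
From mathcomp Require Import all_boot all_order all_algebra.
From mathcomp Require Import boolp classical_sets reals.
From mathcomp.real_closed Require Import complex.
From mathcomp Require Import ring lra.

Import Order.TTheory GRing.Theory Num.Theory.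
Local Open Scope ring_scope.

Module Helpers.
Set Implicit Arguments.
Unset Strict Implicit.
Unset Printing Implicit Defensive.
Local Open Scope complex_scope.
Local Open Scope sesquilinear_scope.

Module PB.


Lemma zz (R : realType) (w a : R) : let z := 'i * w%:C + a%:C in z * conjc z = (w ^+ 2 + a ^+ 2)%:C.
Proof. move=> z. rewrite /z. simpc. congr (_ +i* _); ring. Qed.

Lemma znz (R : realType) (w a : R) : 0 < a -> 'i * w%:C + a%:C != 0.
Proof.
move=> ha; apply/eqP => h; have := congr1 (@complex.Re R) h; simpc => /= h2.
by move: ha; rewrite -h2 ltxx.
Qed.

Lemma cent (R : realType) (c w a Nn : R) : 0 < a ->
  let z := 'i * w%:C + a%:C in
  (c%:C * conjc c%:C) * ((z^-1 * Nn%:C) * conjc (z^-1)) = (c^+2 * Nn / (w^+2 + a^+2))%:C.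
Proof.
move=> ha z.
have hz : z != 0 by apply: znz.
have hz' : conjc z != 0 by rewrite conjc_eq0.
have -> : (c^+2 * Nn / (w^+2 + a^+2))%:C = c%:C ^+ 2 * Nn%:C / (z * conjc z).
  by rewrite zz fmorph_div rmorphM rmorphXn.
rewrite conjc_real conjc_inv expr2.
field; by rewrite hz hz'.
Qed.

Section CM.
Lemma inf_min (R : realType) (E : set R) x0 : E x0 -> (forall x, E x -> x0 <= x) -> inf E = x0.
Proof.
move=> Ex0 lb; apply/le_anti/andP; split; last first.
  by apply: lb_le_inf; [exists x0 | move=> x /lb].
by apply: ge_inf => //; exists x0 => x /lb.
Qed.

Lemma exists_max (R : realType) k (hk : (0 < k)%N) (f : 'I_k -> R) :
  exists j0, forall j, f j <= f j0.
Proof.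
case: k hk f => // k _ f.
case: (@Order.TotalTheory.arg_maxP _ _ _ ord0 xpredT f isT) => j0 _ H.
by exists j0 => j; apply: H.
Qed.

Lemma exists_min (R : realType) k (hk : (0 < k)%N) (f : 'I_k -> R) :
  exists j0, forall j, f j0 <= f j.
Proof.
have [j0 H] := exists_max hk (fun j => - f j).
by exists j0 => j; rewrite -lerN2 H.
Qed.

Lemma sup_max (R : realType) (E : set R) x0 : E x0 -> (forall x, E x -> x <= x0) -> sup E = x0.
Proof.
move=> Ex0 ub; apply/le_anti/andP; split.
  by apply: ge_sup; [exists x0 | move=> x /ub].
by apply: ub_le_sup => //; exists x0 => x /ub.
Qed.

Variable R : realType.
Local Notation C := R[i].

Lemma unit_trC k (P : 'M[C]_k) : P \is unitarymx -> P^t* *m P = 1%:M.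
Proof. by move=> /unitarymxP /mulmx1C. Qed.

Section Cj.
Variables (k : nat) (P : 'M[C]_k).
Hypothesis PU : P \is unitarymx.
Local Notation cj X := (P^t* *m X *m P).

Lemma cjM X Y : cj X *m cj Y = cj (X *m Y).
Proof.
have PP := unitarymxP PU.
by rewrite !mulmxA -(mulmxA _ P (P^t*)) PP mulmx1.
Qed.

Lemma cjD X Y : cj X + cj Y = cj (X + Y).
Proof. by rewrite mulmxDr mulmxDl. Qed.

Lemma cjZ a X : a *: cj X = cj (a *: X).
Proof. by rewrite scalemxAl scalemxAr. Qed.

Lemma cj1 a : cj (a%:M) = a%:M.
Proof. by rewrite mul_mx_scalar -scalemxAl unit_trC // scalemx1. Qed.

Lemma cjV X : X \in unitmx -> invmx (cj X) = cj (invmx X).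
Proof.
move=> Xu.
have h : cj X *m cj (invmx X) = 1%:M by rewrite cjM mulmxV // cj1.
have [hu _] := mulmx1_unit h.
by rewrite -[LHS]mulmx1 -h (mulmxA (invmx _)) mulVmx // mul1mx.
Qed.

Lemma cjT X : (cj X)^t* = cj (X^t*).
Proof. by rewrite !trmx_mul !map_mxM trmxCK mulmxA. Qed.
End Cj.

Lemma diagT k (d : 'rV[C]_k) : (diag_mx d)^t* = diag_mx (map_mx (@conjc R) d).
Proof.
apply/matrixP => i j; rewrite !mxE; case: eqP => [->|]; rewrite ?eqxx ?mulr1n ?mulr0n //=.
by move/eqP; rewrite eq_sym => /negPf ->; rewrite mulr0n conjC0.
Qed.

Lemma toCmxE p q (A : 'M[R]_(p, q)) : toCmx A = A ^ (real_complex R).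
Proof. by []. Qed.

Lemma conjCR (x : R) : Num.conj (x%:C) = x%:C.
Proof. exact: conjc_real. Qed.

Lemma toCT p q (A : 'M[R]_(p, q)) : (toCmx A)^t* = toCmx A^T.
Proof. by apply/matrixP => i j; rewrite !mxE conjCR. Qed.

Lemma eig_conj_diag k (P : 'M[C]_k) (d : 'rV[C]_k) z :
  P \is unitarymx ->
  eigenvalue (P^t* *m diag_mx d *m P) z <-> exists j, z = d 0 j.
Proof.
move=> PU; have PP := unitarymxP PU; have PP' := unit_trC PU.
split.
  move=> /eigenvalueP [v hv vn0].
  set u := v *m P^t*.
  have un0 : u != 0.
    apply: contraNneq vn0 => u0.
    by rewrite -[v]mulmx1 -PP' mulmxA -/u u0 mul0mx.
  have hu : u *m diag_mx d = z *: u.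
    have := congr1 (fun A => A *m P^t*) hv.
    by rewrite !mulmxA -!(mulmxA _ P) PP mulmx1 -scalemxAl.
  have [j uj] : exists j, u 0 j != 0.
    apply/existsP; apply: contraNT un0 => /existsPn H.
    apply/eqP/rowP => j; rewrite [X in _ = X]mxE; have := H j; rewrite negbK => /eqP; exact.
  exists j; have := congr1 (fun A : 'rV[C]_k => A 0 j) hu.
  rewrite mul_mx_diag [in X in X -> _]mxE [X in _ = X -> _]mxE => /eqP; rewrite mulrC -subr_eq0 -mulrBl mulf_eq0.
  by rewrite (negPf uj) orbF subr_eq0 => /eqP.
move=> [j ->]; apply/eigenvalueP.
exists (delta_mx 0 j *m P).
  rewrite !mulmxA -(mulmxA _ P) PP mulmx1 scalemxAl; congr (_ *m _).
  apply/matrixP => a b; rewrite mul_mx_diag !mxE ord1.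
  by rewrite eqxx /=; case: (b =P j) => [->|_]; rewrite ?mul1r ?mulr1 ?mul0r ?mulr0.
apply: contraTneq isT => h.
have := congr1 (fun A => A *m P^t*) h; rewrite -mulmxA PP mulmx1 mul0mx => /matrixP/(_ 0 j).
by rewrite !mxE !eqxx /= => /eqP; rewrite oner_eq0.
Qed.

Lemma eigR k (A : 'M[R]_k) (P : 'M[C]_k) (r : 'rV[R]_k) :
  P \is unitarymx -> toCmx A = P^t* *m diag_mx (toCmx r) *m P ->
  forall x, eigenvalue A x <-> exists j, x = r 0 j.
Proof.
move=> PU hA x.
rewrite -(eigenvalue_map (real_complex R)) -toCmxE hA eig_conj_diag //.
split=> [[j hj]|[j ->]]; exists j; last by rewrite mxE.
by move: hj; rewrite mxE => /complexI.
Qed.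

Lemma ctrmxE p q (A : 'M[C]_(p, q)) : ctrmx A = A^t*.
Proof. by apply/matrixP => i j; rewrite !mxE. Qed.

Lemma lam_maxC_MM m p (M : 'M[C]_(m, p)) (P : 'M[C]_m) (phi : 'rV[R]_m) j0 :
  (m < p)%N -> P \is unitarymx ->
  M *m M^t* = P^t* *m diag_mx (toCmx phi) *m P ->
  (forall j, 0 <= phi 0 j) -> (forall j, phi 0 j <= phi 0 j0) ->
  lam_maxC (ctrmx M *m M) = phi 0 j0.
Proof.
move=> hmp PU hM ph0 phmax; rewrite ctrmxE /lam_maxC; apply: sup_max => /=.
  have [->|phn0] := eqVneq (phi 0 j0) 0.
    have : kermx (M^t*) != 0.
      rewrite kermx_eq0 /row_free; apply: contraTneq hmp => <-.
      by rewrite -leqNgt rank_leq_col.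
    move=> /rowV0Pn [v /sub_kermxP hv vn0]; apply/eigenvalueP; exists v => //.
    by rewrite mulmxA hv mul0mx scale0r.
  have : eigenvalue (M *m M^t*) (toCmx phi 0 j0).
    by rewrite hM; apply/eig_conj_diag => //; exists j0.
  move=> /eigenvalueP [u hu un0]; apply/eigenvalueP; exists (u *m M).
    by rewrite mulmxA -(mulmxA u) hu -scalemxAl mxE.
  apply: contra un0 => /eqP h0; apply/eqP.
  have : u *m M *m M^t* = 0 by rewrite h0 mul0mx.
  rewrite -mulmxA hu => /eqP; rewrite scalemx_eq0 mxE => /orP [|/eqP //].
  by rewrite (fmorph_eq0 (real_complex R)) (negPf phn0).
move=> x /eigenvalueP [v hv vn0].
have [->|xn0] := eqVneq x 0; first exact: ph0.
set u := v *m M^t*.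
have un0 : u != 0.
  apply: contra vn0 => /eqP u0.
  have : v *m (M^t* *m M) = 0 by rewrite mulmxA -/u u0 mul0mx.
  rewrite hv => /eqP; rewrite scalemx_eq0 => /orP [|//].
  by rewrite (fmorph_eq0 (real_complex R)) (negPf xn0).
have : eigenvalue (M *m M^t*) x%:C.
  apply/eigenvalueP; exists u => //.
  by rewrite /u mulmxA -(mulmxA v) hv -scalemxAl.
rewrite hM eig_conj_diag // => -[j]; rewrite mxE => /complexI ->.
exact: phmax.
Qed.

Lemma spectral_real k (A : 'M[R]_k) : A^T = A ->
  exists P : 'M[C]_k, exists r : 'rV[R]_k,
    P \is unitarymx /\ toCmx A = P^t* *m diag_mx (toCmx r) *m P.
Proof.
move=> AT.
have H : toCmx A \is hermsymmx.
  apply/is_hermitianmxP; rewrite expr0 scale1r toCT AT //.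
have := orthomx_spectralP (hermitian_normalmx H).
have PU := spectral_unitarymx (toCmx A).
rewrite invmx_unitary // => hA.
have /mxOverP hr := hermitian_spectral_diag_real H.
exists (spectralmx (toCmx A)), (\row_j complex.Re (spectral_diag (toCmx A) 0 j)).
split => //; rewrite [LHS]hA; congr (_ *m diag_mx _ *m _).
by apply/rowP => j; rewrite !mxE RRe_real // hr.
Qed.

Lemma ctrZ p q (a : C) (X : 'M[C]_(p, q)) : (a *: X)^t* = Num.conj a *: X^t*.
Proof. by apply/matrixP => i j; rewrite !mxE rmorphM. Qed.

Lemma ctrM p q o (X : 'M[C]_(p, q)) (Y : 'M[C]_(q, o)) : (X *m Y)^t* = Y^t* *m X^t*.
Proof. by rewrite trmx_mul map_mxM. Qed.
End CM.

End PB.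
Export PB.
Module PT.


Section Tree.
Variable R : realType.

Lemma edge_const n m (D : 'M[R]_(n, m)) (x : 'rV[R]_n) l :
  oriented_edge_col D l -> (x *m D) 0 l = 0 ->
  forall i k, D i l != 0 -> D k l != 0 -> x 0 i = x 0 k.
Proof.
move=> [i' [j' [hij hi hj h0]]] hx.
have e : (x *m D) 0 l = x 0 i' - x 0 j'.
  rewrite mxE (bigD1 i') //= (bigD1 j') 1?eq_sym //= big1 ?addr0.
    by rewrite hi hj mulr1 mulrN1.
  by move=> t /andP [t1 t2]; rewrite h0 ?mulr0.
have {}e : x 0 i' = x 0 j' by apply/eqP; rewrite -subr_eq0 -e hx.
have hk t : D t l != 0 -> x 0 t = x 0 i'.
  move=> ht; have [->//|t1] := eqVneq t i'.
  have [->//|t2] := eqVneq t j'.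
  by move: ht; rewrite h0 ?eqxx.
by move=> i k /hk -> /hk ->.
Qed.

Lemma tree_free n (D : 'M[R]_(n, n.-1)) : (0 < n)%N -> tree_incidence D ->
  forall a : 'rV_(n.-1), a *m D^T = 0 -> a = 0.
Proof.
move=> n0 [hcol _ hcon].
have hconst (x : 'rV[R]_n) : x *m D = 0 -> forall i j, x 0 i = x 0 j.
  move=> hx i j; have /connectP [p hp ->] := hcon i j.
  elim: p i hp => [|k p IH] i //= /andP [hik hp].
  rewrite -(IH k hp); move: hik => /andP [_ /existsP [l /andP [h1 h2]]].
  by apply: (edge_const (hcol l)) h1 h2; rewrite hx mxE.
have hrk : \rank D = n.-1.
  apply/eqP; rewrite eqn_leq rank_leq_col /=.
  have : (kermx D <= (const_mx 1 : 'rV[R]_n))%MS.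
    apply/row_subP => i.
    have hr : row i (kermx D) *m D = 0 by rewrite -row_mul mulmx_ker row0.
    have -> : row i (kermx D) = (row i (kermx D)) 0 (Ordinal n0) *: const_mx 1.
      apply/rowP => j; rewrite [RHS]mxE [const_mx _ _ _]mxE mulr1; exact: hconst hr _ _.
    by rewrite scalemx_sub.
  move/mxrankS; rewrite mxrank_ker => h.
  have h1 : (\rank (const_mx (1%R : R) : 'rV[R]_n) <= 1)%N by apply: rank_leq_row.
  have := leq_trans h h1; rewrite leq_subLR => h2.
  by rewrite -ltnS -(@ltn_add2l 1) !add1n prednK // (leq_ltn_trans h2) // addn1.
move=> a /eqP; rewrite mulmx_free_eq0 => [/eqP //|].
by rewrite /row_free mxrank_tr hrk.
Qed.
End Tree.

End PT.
Export PT.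
Module PM.


Lemma invdiag (F : fieldType) k (d : 'rV[F]_k) : (forall j, d 0 j != 0) ->
  diag_mx d \in unitmx /\ invmx (diag_mx d) = diag_mx (\row_j (d 0 j)^-1).
Proof.
move=> hd.
have h : diag_mx d *m diag_mx (\row_j (d 0 j)^-1) = 1%:M.
  rewrite mulmx_diag -diag_const_mx; congr diag_mx.
  by apply/rowP => j; rewrite !mxE divff.
have [hu _] := mulmx1_unit h; split => //.
by rewrite -[LHS]mulmx1 -h mulmxA mulVmx // mul1mx.
Qed.

Lemma quad_pos (R : realType) k (b : 'rV[R]_k) (d : 'rV[R]_k) : b != 0 ->
  (forall i, 0 < d 0 i) -> 0 < (b *m diag_mx d *m b^T) 0 0.
Proof.
move=> bn0 hd.
have [i0 hi0] : exists i, b 0 i != 0.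
  apply/existsP; apply: contraNT bn0 => /existsPn H.
  apply/eqP/rowP => j; rewrite [X in _ = X]mxE; have := H j; rewrite negbK => /eqP; exact.
rewrite mxE (bigD1 i0) //=.
have t0 : 0 < (b *m diag_mx d) 0 i0 * b^T i0 0.
  by rewrite mul_mx_diag !mxE mulrAC pmulr_lgt0 // -expr2 lt_def sqrf_eq0 hi0 sqr_ge0.
have r0 : 0 <= \sum_(i | i != i0) (b *m diag_mx d) 0 i * b^T i 0.
  apply: sumr_ge0 => i _; rewrite mul_mx_diag !mxE mulrAC mulr_ge0 ?(ltW (hd _)) //.
  by rewrite -expr2 sqr_ge0.
lra.
Qed.

Lemma eig_scalar (R : realType) k (hk : (0 < k)%N) (a x : R) :
  eigenvalue (a%:M : 'M[R]_k) x <-> x = a.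
Proof.
split.
  move=> /eigenvalueP [v hv vn0]; move: hv; rewrite mul_mx_scalar => /eqP.
  by rewrite -subr_eq0 -scalerBl scaler_eq0 (negPf vn0) orbF subr_eq0 => /eqP ->.
move=> ->; apply/eigenvalueP; exists (const_mx 1); first by rewrite mul_mx_scalar.
by apply/eqP => /rowP /(_ (Ordinal hk)); rewrite !mxE => /eqP; rewrite oner_eq0.
Qed.

Section Main.
Variable R : realType.
Variables (n : nat) (hn : (2 <= n)%N) (D : 'M[R]_(n, n.-1)) (hD : tree_incidence D).
Variables (rho : R) (hrho : 0 < rho) (eps : 'rV[R]_n) (heps : forall i, 0 < eps 0 i).
Variables (sw sv : R).
Local Notation m := n.-1.
Local Notation W := (rho%:M : 'M[R]_m).
Local Notation E := (diag_mx eps).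
Local Notation L := (Les D E).

Lemma hm : (0 < m)%N. Proof. by case: n hn => [|[|k]]. Qed.
Lemma hmp : (m < n + m)%N. Proof. by rewrite -{1}(add0n m) ltn_add2r; case: n hn. Qed.

Lemma invE : invmx E = diag_mx (\row_i (eps 0 i)^-1).
Proof. by case: (@invdiag _ _ eps) => // i; rewrite gt_eqF. Qed.

Lemma dsqrt_diag k (d : 'rV[R]_k) :
  dsqrt (diag_mx d) = diag_mx (\row_i Num.sqrt (d 0 i)).
Proof.
apply/matrixP => i j; rewrite !mxE eqxx mulr1n.
by case: eqP => [->|]; rewrite ?mulr1n ?mulr0n.
Qed.

Lemma dsqrt_scalar k (a : R) : dsqrt (a%:M : 'M[R]_k) = (Num.sqrt a)%:M.
Proof.
apply/matrixP => i j; rewrite !mxE eqxx mulr1n.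
by case: (i == j); rewrite ?mulr1n ?mulr0n.
Qed.

Lemma LT : L^T = L.
Proof. by rewrite /Les !trmx_mul trmxK invE tr_diag_mx mulmxA. Qed.

Definition Bm := row_mx (sw *: (D^T *m dsqrt (invmx E))) (- (sv *: (L *m dsqrt W))).

Lemma BBt : Bm *m Bm^T = sw^+2 *: L + (sv^+2 * rho) *: (L *m L).
Proof.
rewrite /Bm tr_row_mx mul_row_col; congr (_ + _).
  rewrite linearZ /= trmx_mul trmxK invE dsqrt_diag tr_diag_mx.
  rewrite -scalemxAr -scalemxAl scalerA -expr2; congr (_ *: _).
  rewrite mulmxA -(mulmxA (D^T)) mulmx_diag /Les invE; congr (_ *m diag_mx _ *m _).
  by apply/rowP => j; rewrite !mxE -expr2 sqr_sqrtr // invr_ge0 ltW.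
rewrite dsqrt_scalar mul_mx_scalar scalerA -scaleNr.
have -> : forall a : R, (a *: L)^T = a *: L by move=> a; rewrite linearZ /= LT.
by rewrite -scalemxAr -scalemxAl scalerA mulrNN -expr2 exprMn sqr_sqrtr // ltW.
Qed.

Lemma Lpos x : eigenvalue L x -> 0 < x.
Proof.
move=> /eigenvalueP [a ha an0].
have bn0 : a *m D^T != 0.
  by apply: contra an0 => /eqP /(tree_free (ltnW hn) hD) ->.
have q1 : (a *m L *m a^T) 0 0 = ((a *m D^T) *m invmx E *m (a *m D^T)^T) 0 0.
  by rewrite /Les trmx_mul trmxK !mulmxA.
have q2 : (a *m L *m a^T) 0 0 = x * (a *m diag_mx (const_mx 1) *m a^T) 0 0.
  by rewrite ha diag_const_mx mulmx1 -scalemxAl mxE.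
have p1 : 0 < ((a *m D^T) *m diag_mx (\row_i (eps 0 i)^-1) *m (a *m D^T)^T) 0 0.
  by apply: quad_pos bn0 _ => i; rewrite mxE invr_gt0.
have p2 : 0 < (a *m diag_mx (const_mx 1) *m a^T) 0 0.
  by apply: quad_pos an0 _ => i; rewrite mxE.
move: p1; rewrite -invE -q1 q2 => p1.
by rewrite -(pmulr_lgt0 _ p2).
Qed.

Section Spec.
Local Notation C := R[i].
Variables (P : 'M[C]_m) (r : 'rV[R]_m).
Hypotheses (PU : P \is unitarymx) (hL : toCmx L = P^t* *m diag_mx (toCmx r) *m P).
Variables (jmin jmax : 'I_m).
Hypotheses (hjmin : forall j, r 0 jmin <= r 0 j) (hjmax : forall j, r 0 j <= r 0 jmax).

Lemma rpos j : 0 < r 0 j.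
Proof. by apply: Lpos; apply/(eigR PU hL); exists j. Qed.

Lemma lamminL : lam_min L = r 0 jmin.
Proof.
apply: inf_min => [|x]; first by apply/(eigR PU hL); exists jmin.
by move=> /(eigR PU hL) [j ->].
Qed.

Lemma lammaxL : lam_max L = r 0 jmax.
Proof.
apply: sup_max => [|x]; first by apply/(eigR PU hL); exists jmax.
by move=> /(eigR PU hL) [j ->].
Qed.

Lemma svinvL : sv_max (invmx L) = (r 0 jmin)^-1.
Proof.
rewrite /sv_max trmx_inv LT.
set r' := \row_j ((r 0 j)^-1 ^+ 2).
have hr0 j : (toCmx r) 0 j != 0 by rewrite mxE (fmorph_eq0 (real_complex R)) gt_eqF ?rpos.
have [hu hinv] := invdiag hr0.
have h : toCmx (invmx L *m invmx L) = P^t* *m diag_mx (toCmx r') *m P.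
  rewrite toCmxE map_mxM map_invmx -toCmxE hL cjV // cjM // hinv mulmx_diag; congr (_ *m diag_mx _ *m _).
  by apply/rowP => j; rewrite !mxE -(fmorphV (real_complex R)) -rmorphM expr2.
have -> : lam_max (invmx L *m invmx L) = r' 0 jmin.
  apply: sup_max => [|x]; first by apply/(eigR PU h); exists jmin.
  move=> /(eigR PU h) [j ->]; rewrite !mxE lerXn2r ?nnegrE ?invr_ge0 ?(ltW (rpos _)) //.
  by rewrite lef_pV2 ?posrE ?rpos.
by rewrite /r' mxE sqrtr_sqr ger0_norm // invr_ge0 ltW ?rpos.
Qed.

Definition phi (c w : R) : 'rV[R]_m :=
  \row_j (c^+2 * (sw^+2 * r 0 j + sv^+2 * rho * r 0 j ^+ 2)
          / (w^+2 + (rho * r 0 j)^+2)).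

Lemma Mcalc (c w : R) :
  let M := c%:C *: Sigma_t D E W sw sv ('i * w%:C) in
  M *m M^t* = P^t* *m diag_mx (toCmx (phi c w)) *m P.
Proof.
move=> M.
set s := 'i * w%:C.
set z := \row_j (s + (rho * r 0 j)%:C).
have hz j : z 0 j != 0 by rewrite mxE znz // mulr_gt0 ?rpos.
have hK : s%:M + toCmx (L *m W) = P^t* *m diag_mx z *m P.
  rewrite mul_mx_scalar toCmxE map_mxZ -toCmxE hL cjZ -(cj1 PU s) cjD.
  apply: (congr1 (fun X => P^t* *m X *m P)); apply/matrixP => i j; rewrite !mxE.
  by case: (i == j); rewrite ?mulr1n ?mulr0n ?mulr0 ?addr0; [congr (_ + _); simpc | ].
have [zu zinv] := invdiag hz.
set Y := diag_mx (\row_j (z 0 j)^-1).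
have hS : Sigma_t D E W sw sv s = P^t* *m Y *m P *m toCmx Bm.
  have e : invmx (diag_mx z) = Y by exact: zinv.
  by rewrite /Sigma_t hK (cjV PU) ?e.
set N := \row_j (sw^+2 * r 0 j + sv^+2 * rho * r 0 j ^+ 2)%:C.
have hB : toCmx Bm *m (toCmx Bm)^t* = P^t* *m diag_mx N *m P.
  have e1 : toCmx (sw^+2 *: L + (sv^+2*rho) *: (L *m L)) =
      (sw^+2)%:C *: toCmx L + (sv^+2*rho)%:C *: (toCmx L *m toCmx L).
    by rewrite !toCmxE map_mxD !map_mxZ (map_mxM _ L L).
  rewrite toCT toCmxE -map_mxM -toCmxE BBt e1 hL.
  rewrite (cjM PU) !cjZ cjD mulmx_diag.
  apply: (congr1 (fun X => P^t* *m X *m P)).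
  apply/matrixP => i j; rewrite !mxE.
  case: (i == j); rewrite ?mulr1n ?mulr0n ?mulr0 ?addr0 //.
  by simpc; congr (_ +i* _); ring.
rewrite /M hS ctrZ ctrM cjT -scalemxAl -scalemxAr scalerA.
rewrite -(mulmxA (P^t* *m Y *m P)) (mulmxA (toCmx Bm)) hB mulmxA (cjM PU) (cjM PU) diagT cjZ.
apply: (congr1 (fun X => P^t* *m X *m P)).
rewrite !mulmx_diag; apply/matrixP => i j; rewrite !mxE.
case: (i == j); rewrite ?mulr1n ?mulr0n ?mulr0 //.
exact: (cent c w _ (mulr_gt0 hrho (rpos i))).
Qed.

Definition V := sw^+2 / (rho^+2 * r 0 jmin) + sv^+2 / rho.

Lemma phi_ge0 c w j : 0 <= phi c w 0 j.
Proof.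
have rp := rpos j.
rewrite mxE; apply: divr_ge0; last by apply: addr_ge0; apply: sqr_ge0.
apply: mulr_ge0; first exact: sqr_ge0.
apply: addr_ge0; first exact: (mulr_ge0 (sqr_ge0 _) (ltW rp)).
exact: (mulr_ge0 (mulr_ge0 (sqr_ge0 _) (ltW hrho)) (sqr_ge0 _)).
Qed.

Lemma phi_le c w j : phi c w 0 j <= c^+2 * V.
Proof.
have rp := rpos j; have rm := rpos jmin; have hj := hjmin j.
have d0 : 0 < (rho * r 0 j)^+2 by rewrite exprn_gt0 // mulr_gt0.
have d1 : 0 < w^+2 + (rho * r 0 j)^+2 by apply: ltr_wpDl; rewrite ?sqr_ge0.
rewrite mxE ler_pdivrMr //.
have V0 : 0 <= c^+2 * V.
  apply: mulr_ge0; rewrite ?sqr_ge0 // /V addr_ge0 // divr_ge0 ?sqr_ge0 ?ltW //.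
  by rewrite mulr_gt0 // exprn_gt0.
have A : c^+2 * V * (rho * r 0 j)^+2 <= c^+2 * V * (w^+2 + (rho * r 0 j)^+2).
  by rewrite ler_wpM2l // lerDr sqr_ge0.
have B : c^+2 * V * (rho * r 0 j)^+2 =
   c^+2 * (sw^+2 * (r 0 j / r 0 jmin) * r 0 j + sv^+2 * rho * r 0 j^+2).
  by rewrite /V; field; rewrite !gt_eqF.
have C1 : 1 <= r 0 j / r 0 jmin by rewrite ler_pdivlMr // mul1r.
have C : sw^+2 * r 0 j <= sw^+2 * (r 0 j / r 0 jmin) * r 0 j.
  by rewrite -mulrA ler_wpM2l ?sqr_ge0 // ler_peMl // ltW.
have C' : c^+2 * (sw^+2 * r 0 j + sv^+2 * rho * r 0 j ^+ 2) <=
          c^+2 * (sw^+2 * (r 0 j / r 0 jmin) * r 0 j + sv^+2 * rho * r 0 j^+2).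
  by rewrite ler_wpM2l ?sqr_ge0 // lerD2r.
rewrite -B in C'; exact: le_trans C' A.
Qed.

Lemma phi0 c : phi c 0 0 jmin = c^+2 * V.
Proof.
have rm := rpos jmin.
rewrite mxE /V; field.
by apply/andP; split; rewrite gt_eqF.
Qed.

Lemma svC c w j0 : (forall j, phi c w 0 j <= phi c w 0 j0) ->
  sv_maxC (c%:C *: Sigma_t D E W sw sv ('i * w%:C)) = Num.sqrt (phi c w 0 j0).
Proof.
move=> hj0; rewrite /sv_maxC; congr Num.sqrt.
apply: lam_maxC_MM hmp PU (Mcalc c w) _ hj0.
exact: phi_ge0.
Qed.

Lemma Hinf_c c (Phi : R[i] -> 'M[R[i]]_(m, n + m)) :
  (forall s, Phi s = c%:C *: Sigma_t D E W sw sv s) ->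
  Hinf_norm Phi = Num.sqrt (c^+2 * V).
Proof.
move=> hPhi; rewrite /Hinf_norm; apply: sup_max.
  exists 0 => //; rewrite hPhi.
  have [j0 hj0] := exists_max hm (fun j => phi c 0 0 j).
  rewrite (svC hj0); congr Num.sqrt; apply/le_anti/andP; split.
    exact: phi_le.
  by rewrite -phi0 hj0.
move=> x [w _ <-]; rewrite hPhi.
have [j0 hj0] := exists_max hm (fun j => phi c w 0 j).
rewrite (svC hj0) ler_sqrt ?phi_le //.
apply: mulr_ge0; first exact: sqr_ge0.
by have := phi_ge0 1 0 jmin; rewrite phi0 expr1n mul1r.
Qed.
End Spec.
End Main.

End PM.
Export PM.
End Helpers.
Import Helpers.

Theorem corollary3 (R : realType) (n : nat) (hn : (2 <= n)%N)
    (D : 'M[R]_(n, n.-1)) (hD : tree_incidence D)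
    (rho : R) (hrho : 0 < rho)
    (eps : 'rV[R]_n) (heps : forall i, 0 < eps 0 i)
    (sw sv : R) :
  let W : 'M[R]_n.-1 := rho%:M in
  let E : 'M[R]_n := diag_mx eps in
  let L := Les D E in
  let Wh := dsqrt W in
  let L1 := (sw ^+ 2 + sv ^+ 2 * lam_min L * lam_max Wh ^+ 2)
            / (lam_min L * lam_max Wh ^+ 4) in
  let L2 := (sw ^+ 2 + sv ^+ 2 * lam_max L * lam_max Wh * lam_min Wh)
            / (lam_max L * lam_max Wh ^+ 3 * lam_min Wh) in
  let U := (sw ^+ 2 + sv ^+ 2 * lam_min L * lam_min Wh ^+ 2)
            / (lam_min L * lam_min Wh ^+ 4) in
  [/\ Hinf_norm (Sigma_t D E W sw sv) ^+ 2
        = rho^-1 * Hinf_norm (Pi_t D E W sw sv) ^+ 2,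
      rho^-1 * Hinf_norm (Pi_t D E W sw sv) ^+ 2
        = (rho ^+ 2)^-1 * sw ^+ 2 * sv_max (invmx L) + rho^-1 * sv ^+ 2,
      (rho ^+ 2)^-1 * sw ^+ 2 * sv_max (invmx L) + rho^-1 * sv ^+ 2
        = Num.max L1 L2
    & Num.max L1 L2 = U].
Proof.
cbv zeta.
have hm' := hm hn.
have [P [r [PU hL]]] := spectral_real (LT D heps).
have [jmin hjmin] := exists_min hm' (fun j => r 0 j).
have [jmax hjmax] := exists_max hm' (fun j => r 0 j).
have rp := rpos hn hD heps PU hL.
rewrite (lamminL PU hL hjmin) (lammaxL PU hL hjmax) (svinvL hn hD heps PU hL hjmin).
set q := Num.sqrt rho.
have hq : rho = q ^+ 2 by rewrite sqr_sqrtr // ltW.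
have q0 : 0 < q by rewrite sqrtr_gt0.
have hWh : dsqrt (rho%:M : 'M[R]_n.-1) = q%:M by rewrite dsqrt_scalar.
have lmx : lam_max (dsqrt (rho%:M : 'M[R]_n.-1)) = q.
  rewrite hWh; apply: sup_max => [|x]; first by apply/(eig_scalar hm').
  by move=> /(eig_scalar hm') ->.
have lmn : lam_min (dsqrt (rho%:M : 'M[R]_n.-1)) = q.
  rewrite hWh; apply: inf_min => [|x]; first by apply/(eig_scalar hm').
  by move=> /(eig_scalar hm') ->.
rewrite lmx lmn.
have hS : Hinf_norm (Sigma_t D (diag_mx eps) (rho%:M : 'M[R]_n.-1) sw sv) =
          Num.sqrt (1 ^+ 2 * V rho sw sv r jmin).
  by apply: (Hinf_c hn hD hrho heps PU hL hjmin) => s; rewrite scale1r.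
have hP : Hinf_norm (Pi_t D (diag_mx eps) (rho%:M : 'M[R]_n.-1) sw sv) =
          Num.sqrt (q ^+ 2 * V rho sw sv r jmin).
  apply: (Hinf_c hn hD hrho heps PU hL hjmin) => s.
  by rewrite /Pi_t hWh /toCmx map_scalar_mx mul_scalar_mx.
have V0 : 0 <= V rho sw sv r jmin.
  by have := phi_ge0 hn hD hrho heps sw sv PU hL 1 0 jmin; rewrite (phi0 hn hD hrho heps sw sv PU hL jmin) expr1n mul1r.
rewrite hS hP !sqr_sqrtr ?mulr_ge0 ?sqr_ge0 // ?expr1n ?mul1r.
have rm := rp jmin; have rM := rp jmax.
have hr : r 0 jmin <= r 0 jmax := hjmin jmax.
have e1 : (q ^+ 2 ^+ 2)^-1 * sw ^+ 2 * (r 0 jmin)^-1 + (q^+2)^-1 * sv ^+ 2 =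
          (sw ^+ 2 + sv ^+ 2 * r 0 jmin * q ^+ 2) / (r 0 jmin * q ^+ 4).
  by field; rewrite !gt_eqF.
have e2 : (sw ^+ 2 + sv ^+ 2 * r 0 jmax * q * q) / (r 0 jmax * q ^+ 3 * q) =
          (q ^+ 2 ^+ 2)^-1 * sw ^+ 2 * (r 0 jmax)^-1 + (q^+2)^-1 * sv ^+ 2.
  by field; rewrite !gt_eqF.
have eV : V rho sw sv r jmin = (q ^+ 2 ^+ 2)^-1 * sw ^+ 2 * (r 0 jmin)^-1 + (q^+2)^-1 * sv ^+ 2.
  by rewrite /V hq; field; rewrite !gt_eqF.
have hle : (q ^+ 2 ^+ 2)^-1 * sw ^+ 2 * (r 0 jmax)^-1 <= (q ^+ 2 ^+ 2)^-1 * sw ^+ 2 * (r 0 jmin)^-1.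
  have h0 : 0 <= (q ^+ 2 ^+ 2)^-1 * sw ^+ 2 by apply: mulr_ge0; rewrite ?invr_ge0 sqr_ge0.
  by rewrite ler_wpM2l // lef_pV2 ?posrE.
clearbody q.
rewrite eV hq -e1 e2 max_l; last by rewrite lerD2r.
split => //; try (field; by rewrite ?(gt_eqF rm) ?(gt_eqF q0)).
all: exact: (ltW hrho).
Qed.
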